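(* Let $\mathsf{v}_1,\mathsf{v}_2\in V$ be consistently oriented, ultraparallel spacelike vectors. Suppose $p_i=a_i\mathsf{v}_i^- - b_i\mathsf{v}_i^+$ with $a_i,b_i>0$ for $i=1,2$ (regarded as points of $E$ via a chosen origin). Then the crooked planes $\mathcal{C}(\mathsf{v}_1,p_1)$ and $\mathcal{C}(\mathsf{v}_2,p_2)$ are disjoint.
   Context: $V=\mathbb{R}^3$ with Lorentzian inner product $x\cdot y=x_1y_1+x_2y_2-x_3y_3$ and standard orientation; $E$ is the affine space with translation space $V$. Null: $x\cdot x=0$; spacelike: $x\cdot x>0$; future-pointing: third coordinate positive. The Lorentzian cross product $\boxtimes$ is the bilinear map with $u\cdot(v\boxtimes w)=\det[u\ v\ w]$. Spacelike $\mathsf{u},\mathsf{v}$ are ultraparallel if $\mathsf{u}\boxtimes\mathsf{v}$ is spacelike. For spacelike $\mathsf{v}$, $\mathsf{v}^-,\mathsf{v}^+$ are the two future-pointing null vectors of Euclidean length $1$ in $\mathsf{v}^\perp$, labelled so that $(\mathsf{v}^-,\mathsf{v}^+,\mathsf{v})$ is positively oriented. Spacelike $\mathsf{v}_1,\mathsf{v}_2$ are consistently oriented if $\mathsf{v}_1\cdot\mathsf{v}_2<0$ and $\mathsf{v}_i\cdot\mathsf{v}_j^{\pm}\le0$ for $i\ne j$. For null $x$, $\mathcal{P}(x)$ is the set of spacelike $w\in x^\perp$ with $w^+$ a positive multiple of $x$. The crooked plane $\mathcal{C}(\mathsf{v},p)=(p+\mathcal{P}(\mathsf{v}^+))\cup(p+\mathcal{P}(\mathsf{v}^-))\cup(p+\{x:\mathsf{v}\cdot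 x=0,\ x\cdot x\le0\})$. *)

(* Defs.v *)
(* Points of E and vectors of V are both modelled by 'rV[R]_3
   (E identified with V via a chosen origin). *)
From mathcomp Require Import all_boot all_order.
From mathcomp Require Import all_algebra.
From mathcomp Require Import ring.
Set Implicit Arguments. Unset Strict Implicit. Unset Printing Implicit Defensive.
Import Order.TTheory GRing.Theory Num.Theory.
Local Open Scope ring_scope.

Section Lorentz.
Variable R : rcfType.
Notation vec := 'rV[R]_3.

Definition c0 (x : vec) := x ord0 (@Ordinal 3 0 isT).
Definition c1 (x : vec) := x ord0 (@Ordinal 3 1 isT).
Definition c2 (x : vec) := x ord0 (@Ordinal 3 2 isT).

Definition ldot (x y : vec) : R := c0 x * c0 y + c1 x * c1 y - c2 x * c2 y.

Definition enorm (x : vec) : R := Num.sqrt (c0 x ^+ 2 + c1 x ^+ 2 + c2 x ^+ 2).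

Definition cols3 (u v w : vec) : 'M[R]_3 :=
  \matrix_(i < 3, j < 3) (if j == 0 :> nat then u ord0 i
                          else if j == 1 :> nat then v ord0 i else w ord0 i).

Definition null (x : vec) := ldot x x = 0.
Definition spacelike (x : vec) := ldot x x > 0.
Definition future (x : vec) := c2 x > 0.

(* Lorentzian cross product: u . (v [x] w) = det [u v w] for all u *)
Definition lcross (v w : vec) : vec :=
  \row_(i < 3) (if i == 0 :> nat then c1 v * c2 w - c2 v * c1 w
                else if i == 1 :> nat then c2 v * c0 w - c0 v * c2 w
                else - (c0 v * c1 w - c1 v * c0 w)).

Definition ultraparallel (u v : vec) :=
  spacelike u /\ spacelike v /\ spacelike (lcross u v).

Definition unit_null_perp (v x : vec) :=
  null x /\ future x /\ enorm x = 1 /\ ldot v x = 0.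

(* x = v^- and y = v^+ : the two such vectors, with (v^-, v^+, v) positively
   oriented. *)
Definition is_vminus (v x : vec) :=
  unit_null_perp v x /\
  exists y, unit_null_perp v y /\ \det (cols3 x y v) > 0.
Definition is_vplus (v y : vec) :=
  unit_null_perp v y /\
  exists x, unit_null_perp v x /\ \det (cols3 x y v) > 0.

Definition consistently_oriented (v1 v2 : vec) :=
  spacelike v1 /\ spacelike v2 /\ ldot v1 v2 < 0 /\
  (forall x, (is_vminus v2 x \/ is_vplus v2 x) -> ldot v1 x <= 0) /\
  (forall x, (is_vminus v1 x \/ is_vplus v1 x) -> ldot v2 x <= 0).

Definition Pwing (x w : vec) :=
  spacelike w /\ ldot w x = 0 /\
  exists y, is_vplus w y /\ exists c : R, 0 < c /\ y = c *: x.

Definition crooked (v p q : vec) :=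
  (exists vp w, is_vplus v vp /\ Pwing vp w /\ q = p + w) \/
  (exists vm w, is_vminus v vm /\ Pwing vm w /\ q = p + w) \/
  (exists x, ldot v x = 0 /\ ldot x x <= 0 /\ q = p + x).

End Lorentz.

Lemma lcross_spec (R : rcfType) (u v w : 'rV[R]_3) :
  ldot u (lcross v w) = \det (cols3 u v w).
Proof.
rewrite (expand_det_col _ 0) !big_ord_recl big_ord0 /cofactor.
rewrite !(expand_det_col _ 0) !big_ord_recl !big_ord0 /cofactor !det_mx11.
rewrite /ldot /lcross /c0 /c1 /c2 !mxE /=.
rewrite /= !expr0 !expr1 /bump /=.
repeat match goal with
 | |- context [@lift 3 ?a ?b] =>
   let k := eval compute in (nat_of_ord (@lift 3 a b)) in
   have -> : @lift 3 a b = (@Ordinal 3 k isT) by apply/val_inj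
 end.
have -> : (ord0 : 'I_3) = Ordinal (isT : 0 < 3)%N by apply/val_inj.
try (have -> : (0 : 'I_3) = Ordinal (isT : 0 < 3)%N by apply/val_inj).
rewrite /=.
ring.
Qed.

(* Main.v *)
Require Import Defs.
From mathcomp Require Import all_boot all_order.
From mathcomp Require Import all_algebra.
From mathcomp Require Import ring lra.
Import Order.TTheory GRing.Theory Num.Theory.
Local Open Scope ring_scope.

Set Implicit Arguments. Unset Strict Implicit. Unset Printing Implicit Defensive.

Section Aux.
Variable R : rcfType.
Implicit Types (a b c d e f q u v w x y z : 'rV[R]_3).

Definition dt u v w := ldot u (lcross v w).

Lemma c0_lc v w : c0 (lcross v w) = c1 v * c2 w - c2 v * c1 w.
Proof. by rewrite {1}/c0 /lcross mxE. Qed.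
Lemma c1_lc v w : c1 (lcross v w) = c2 v * c0 w - c0 v * c2 w.
Proof. by rewrite {1}/c1 /lcross mxE. Qed.
Lemma c2_lc v w : c2 (lcross v w) = - (c0 v * c1 w - c1 v * c0 w).
Proof. by rewrite {1}/c2 /lcross mxE. Qed.

Lemma dtE u v w : dt u v w = c0 u * (c1 v * c2 w - c2 v * c1 w)
  + c1 u * (c2 v * c0 w - c0 v * c2 w) - c2 u * (- (c0 v * c1 w - c1 v * c0 w)).
Proof. by rewrite /dt /ldot c0_lc c1_lc c2_lc. Qed.

Lemma ldotC x y : ldot x y = ldot y x.
Proof. rewrite /ldot; ring. Qed.

Lemma dt_cyc a b c : dt a b c = dt b c a.
Proof. rewrite !dtE; ring. Qed.
Lemma dt_swap a b c : dt a b c = - dt b a c.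
Proof. rewrite !dtE; ring. Qed.
Lemma dt_aa a c : dt a a c = 0.
Proof. rewrite !dtE; ring. Qed.

Lemma gram a b c d e f : dt a b c * dt d e f =
  - (ldot a d * (ldot b e * ldot c f - ldot b f * ldot c e)
   - ldot a e * (ldot b d * ldot c f - ldot b f * ldot c d)
   + ldot a f * (ldot b d * ldot c e - ldot b e * ldot c d)).
Proof. rewrite !dtE /ldot; ring. Qed.

Lemma four q w1 w2 w3 w4 : dt w2 w3 w4 * ldot q w1 - dt w1 w3 w4 * ldot q w2
  + dt w1 w2 w4 * ldot q w3 - dt w1 w2 w3 * ldot q w4 = 0.
Proof. rewrite !dtE /ldot; ring. Qed.

Lemma crossnorm u v : ldot (lcross u v) (lcross u v) = ldot u v ^+ 2 - ldot u u * ldot v v.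
Proof. rewrite /ldot c0_lc c1_lc c2_lc; ring. Qed.

Lemma ldotD x y z : ldot (x + y) z = ldot x z + ldot y z.
Proof. rewrite /ldot /c0 /c1 /c2 !mxE; ring. Qed.
Lemma ldotZB (s t : R) x y z : ldot (s *: x - t *: y) z = s * ldot x z - t * ldot y z.
Proof. rewrite /ldot /c0 /c1 /c2 !mxE; ring. Qed.
Lemma dtZ x y w (s : R) : dt x (s *: y) w = s * dt x y w.
Proof. rewrite !dtE /c0 /c1 /c2 !mxE; ring. Qed.

Lemma enorm1 x : enorm x = 1 -> c0 x ^+ 2 + c1 x ^+ 2 + c2 x ^+ 2 = 1.
Proof.
move=> H. have h0 : 0 <= c0 x ^+ 2 + c1 x ^+ 2 + c2 x ^+ 2 by nra.
by rewrite -(sqr_sqrtr h0) -/(enorm x) H expr1n.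
Qed.

Lemma fnull_le a b : null a -> future a -> null b -> future b -> ldot a b <= 0.
Proof.
rewrite /null /future /ldot => na fa nb fb.
have h : (c0 a * c0 b + c1 a * c1 b) ^+ 2 <= (c2 a * c2 b) ^+ 2.
  have -> : (c2 a * c2 b) ^+ 2 = (c0 a * c0 b + c1 a * c1 b) ^+ 2 + (c0 a * c1 b - c1 a * c0 b) ^+ 2.
    have e1 : c2 a * c2 a = c0 a * c0 a + c1 a * c1 a by lra.
    have e2 : c2 b * c2 b = c0 b * c0 b + c1 b * c1 b by lra.
    rewrite exprMn !expr2 e1 e2; ring.
  by rewrite lerDl sqr_ge0.
have hp : 0 < c2 a * c2 b by nra.
nra.
Qed.

Lemma unit_eq a b : null a -> future a -> enorm a = 1 ->
  null b -> future b -> enorm b = 1 -> ldot a b = 0 -> a = b.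
Proof.
rewrite /null /future /ldot => na fa /enorm1 ea nb fb /enorm1 eb ab.
have sa : c2 a * c2 a = c2 b * c2 b by rewrite !expr2 in ea eb; lra.
have a2 : c2 a = c2 b.
  have : (c2 a - c2 b) * (c2 a + c2 b) = 0 by rewrite mulrDr !mulrBl sa; ring.
  move/eqP; rewrite mulf_eq0 => /orP [|]; first by rewrite subr_eq0 => /eqP.
  move=> /eqP; lra.
have h : (c0 a - c0 b) ^+ 2 + (c1 a - c1 b) ^+ 2 = 0.
  rewrite !expr2 in ea eb *; rewrite a2 in na ab; nra.
have a0 : c0 a = c0 b.
  have : (c0 a - c0 b) ^+ 2 = 0 by move: h; have := sqr_ge0 (c0 a - c0 b); have := sqr_ge0 (c1 a - c1 b); lra.
  by move/eqP; rewrite sqrf_eq0 subr_eq0 => /eqP.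
have a1 : c1 a = c1 b.
  have : (c1 a - c1 b) ^+ 2 = 0 by move: h; have := sqr_ge0 (c0 a - c0 b); have := sqr_ge0 (c1 a - c1 b); lra.
  by move/eqP; rewrite sqrf_eq0 subr_eq0 => /eqP.
apply/rowP => j; move: a0 a1 a2; rewrite /c0 /c1 /c2 => a0 a1 a2.
case: j => [[|[|[|k]]] Hk] //.
- by rewrite (bool_irrelevance Hk isT).
- by rewrite (bool_irrelevance Hk isT).
- by rewrite (bool_irrelevance Hk isT).
Qed.

End Aux.


Section Aux2.
Variable R : rcfType.
Implicit Types (a b c d e f q u v w x y z : 'rV[R]_3).

Lemma S_det0 v a b c x y : ldot v a = 0 -> ldot v b = 0 -> ldot v c = 0 ->
  dt x y v != 0 -> dt a b c = 0.
Proof.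
move=> Ha Hb Hc Hn.
have h := gram a b c x y v.
rewrite [ldot a v]ldotC [ldot b v]ldotC [ldot c v]ldotC Ha Hb Hc in h.
have : dt a b c * dt x y v = 0 by rewrite h; ring.
by move/eqP; rewrite mulf_eq0 (negbTE Hn) orbF => /eqP.
Qed.

Lemma three v a b c x y : unit_null_perp v a -> unit_null_perp v b ->
  unit_null_perp v c -> dt x y v != 0 -> a = b \/ b = c \/ a = c.
Proof.
move=> [na [fa [ea pa]]] [nb [fb [eb pb]]] [nc [fc [ec pc]]] Hn.
have h0 := S_det0 pa pb pc Hn.
have h := gram a b c a b c.
rewrite h0 mul0r na nb nc in h.
have : ldot a b * ldot b c * ldot a c = 0.
  move: h; rewrite [ldot b a]ldotC [ldot c a]ldotC [ldot c b]ldotC => h.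
  have : 2 * (ldot a b * ldot b c * ldot a c) = 0 by nra.
  by move/eqP; rewrite mulf_eq0 pnatr_eq0 /= => /eqP.
move/eqP; rewrite !mulf_eq0 => /orP [/orP [] |] /eqP H.
- by left; apply: unit_eq.
- by right; left; apply: unit_eq.
- by right; right; apply: unit_eq.
Qed.

Lemma orient_unique v a b c d : unit_null_perp v a -> unit_null_perp v b ->
  unit_null_perp v c -> unit_null_perp v d -> 0 < dt a b v -> 0 < dt c d v ->
  a = c /\ b = d.
Proof.
move=> Ua Ub Uc Ud Pab Pcd.
have Nab := lt0r_neq0 Pab.
case: (three Ua Ub Uc Nab) => [Eab | [Ebc | Eac]].
- by exfalso; move: Pab; rewrite Eab dt_aa ltxx.
- case: (three Ua Ub Ud Nab) => [Eab | [Ebd | Ead]].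
  + by exfalso; move: Pab; rewrite Eab dt_aa ltxx.
  + by exfalso; move: Pcd; rewrite -Ebc -Ebd dt_aa ltxx.
  + exfalso; move: Pcd; rewrite -Ebc -Ead (dt_swap b a v); lra.
- case: (three Ua Ub Ud Nab) => [Eab | [Ebd | Ead]].
  + by exfalso; move: Pab; rewrite Eab dt_aa ltxx.
  + by [].
  + by exfalso; move: Pcd; rewrite -Eac -Ead dt_aa ltxx.
Qed.

Lemma det_dt x y v : \det (cols3 x y v) = dt x y v.
Proof. by rewrite -lcross_spec. Qed.

Lemma frame v em ep : is_vminus v em -> is_vplus v ep -> 0 < dt em ep v.
Proof.
move=> [Um [y [Uy Py]]] [Up [x [Ux Px]]]; rewrite det_dt in Py; rewrite det_dt in Px.
have [E1 E2] := orient_unique Um Uy Ux Up Py Px.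
by rewrite E1.
Qed.

Lemma vplus_unique v y y' : is_vplus v y -> is_vplus v y' -> y = y'.
Proof.
move=> [Uy [x [Ux Px]]] [Uy' [x' [Ux' Px']]]; rewrite det_dt in Px; rewrite det_dt in Px'.
by have [_ ->] := orient_unique Ux Uy Ux' Uy' Px Px'.
Qed.

Lemma vminus_unique v y y' : is_vminus v y -> is_vminus v y' -> y = y'.
Proof.
move=> [Uy [x [Ux Px]]] [Uy' [x' [Ux' Px']]]; rewrite det_dt in Px; rewrite det_dt in Px'.
by have [-> _] := orient_unique Uy Ux Uy' Ux' Px Px'.
Qed.

End Aux2.


Section Aux3.
Variable R : rcfType.
Implicit Types (a b c d e f q u v w x y z : 'rV[R]_3).

Section Frame.
Variables (v em ep : 'rV[R]_3).
Hypothesis Hm : is_vminus v em.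
Hypothesis Hp : is_vplus v ep.
Hypothesis Hs : spacelike v.

Lemma Um : unit_null_perp v em. Proof. by case: Hm. Qed.
Lemma Up : unit_null_perp v ep. Proof. by case: Hp. Qed.
Lemma Dpos : 0 < dt em ep v. Proof. exact: frame. Qed.

Lemma Nneg : ldot em ep < 0.
Proof.
have [nm [fm [um pm]]] := Um; have [np [fp [up pp]]] := Up.
rewrite lt_def fnull_le // andbT.
apply/negP => /eqP H.
have E := unit_eq nm fm um np fp up (esym H).
by have := Dpos; rewrite E dt_aa ltxx.
Qed.

Lemma lamp X : dt v ep X * dt em ep v = - (ldot v v * ldot em ep * ldot X ep).
Proof.
have [nm [fm [um pm]]] := Um; have [np [fp [up pp]]] := Up.
have h := gram v ep X v ep em.
rewrite [ldot ep v]ldotC [ldot ep em]ldotC pm pp np in h.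
have e : dt v ep em = - dt em ep v by rewrite dt_cyc dt_swap.
rewrite e in h.
have : dt v ep X * (- dt em ep v) = ldot v v * ldot em ep * ldot X ep by rewrite h; ring.
move=> h2; rewrite -h2; ring.
Qed.

Lemma lamm X : dt v em X * dt em ep v = ldot v v * ldot em ep * ldot X em.
Proof.
have [nm [fm [um pm]]] := Um; have [np [fp [up pp]]] := Up.
have h := gram v em X v em ep.
rewrite [ldot em v]ldotC pm pp nm in h.
have e : dt v em ep = dt em ep v by rewrite dt_cyc.
rewrite e in h.
rewrite h; ring.
Qed.

Definition lp := - (ldot v v * ldot em ep) / dt em ep v.
Definition lm := (ldot v v * ldot em ep) / dt em ep v.

Lemma lp_pos : 0 < lp.
Proof.
have hs : 0 < ldot v v := Hs. have := Nneg; have := Dpos => hD hN.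
apply: divr_gt0 => //; nra.
Qed.

Lemma lm_neg : lm < 0.
Proof.
have hs : 0 < ldot v v := Hs. have := Nneg; have := Dpos => hD hN.
rewrite /lm ltNge; apply/negP => h.
have : 0 <= ldot v v * ldot em ep by rewrite -(divfK (lt0r_neq0 hD) (ldot v v * ldot em ep)); apply: mulr_ge0 => //; exact: ltW.
nra.
Qed.

Lemma lpE X : dt v ep X = lp * ldot X ep.
Proof.
have hD := lt0r_neq0 Dpos.
rewrite -(mulfK hD (dt v ep X)) lamp /lp; field; exact: hD.
Qed.

Lemma lmE X : dt v em X = lm * ldot X em.
Proof.
have hD := lt0r_neq0 Dpos.
rewrite -(mulfK hD (dt v em X)) lamm /lm; field; exact: hD.
Qed.

Lemma wing_p w : Pwing ep w -> 0 < ldot w v /\ ldot w ep = 0.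
Proof.
move=> [sw [wep [y [[Uy [x [Ux Px]]] [c [c0 yE]]]]]].
split=> //.
have [nm [fm [um pm]]] := Um; have [np [fp [up pp]]] := Up.
have [nx [fx _]] := Ux.
rewrite det_dt yE dtZ pmulr_rgt0 // in Px.
have h := gram x ep w v ep em.
rewrite [ldot ep v]ldotC [ldot ep em]ldotC pp np wep in h.
have e : dt v ep em = - dt em ep v by rewrite dt_cyc dt_swap.
rewrite e in h.
have hxe := fnull_le nx fx np fp.
have hN := Nneg. have hD := Dpos.
have h2 : dt x ep w * dt em ep v = ldot x ep * ldot em ep * ldot w v.
  have -> : dt x ep w * dt em ep v = - (dt x ep w * - dt em ep v) by ring.
  rewrite h; ring.
have h3 : 0 < ldot x ep * ldot em ep * ldot w v by rewrite -h2; apply: mulr_gt0.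
have h4 : 0 <= ldot x ep * ldot em ep by nra.
nra.
Qed.

Lemma wing_m w : Pwing em w -> ldot w v < 0 /\ ldot w em = 0.
Proof.
move=> [sw [wem [y [[Uy [x [Ux Px]]] [c [c0 yE]]]]]].
split=> //.
have [nm [fm [um pm]]] := Um; have [np [fp [up pp]]] := Up.
have [nx [fx _]] := Ux.
rewrite det_dt yE dtZ pmulr_rgt0 // in Px.
have h := gram x em w v em ep.
rewrite [ldot em v]ldotC pm nm wem in h.
have e : dt v em ep = dt em ep v by rewrite dt_cyc.
rewrite e in h.
have hxe := fnull_le nx fx nm fm.
have hN := Nneg. have hD := Dpos.
have h3 : 0 < - (ldot x em * ldot em ep * ldot w v).
  have -> : - (ldot x em * ldot em ep * ldot w v) = dt x em w * dt em ep v by rewrite h; ring.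
  exact: mulr_gt0.
have h4 : 0 <= ldot x em * ldot em ep by nra.
nra.
Qed.

Lemma stem x : ldot v x = 0 -> ldot x x <= 0 -> 0 <= ldot x ep * ldot x em.
Proof.
move=> vx xx.
have [nm [fm [um pm]]] := Um; have [np [fp [up pp]]] := Up.
have hD := lt0r_neq0 Dpos. have hN := Nneg.
have h0 := S_det0 pm pp vx hD.
have h := gram em ep x em ep x.
rewrite h0 mul0r nm np [ldot ep em]ldotC [ldot x em]ldotC [ldot x ep]ldotC in h.
have h2 : 2 * ldot em ep * (ldot em x * ldot ep x) = ldot em ep ^+ 2 * ldot x x.
  by rewrite expr2; nra.
rewrite [ldot x ep]ldotC [ldot x em]ldotC.
nra.
Qed.

Definition half q := (0 <= ldot q v /\ ldot q ep < 0) \/ (ldot q v <= 0 /\ 0 < ldot q em).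

Lemma crooked_half (a b : R) q : 0 < a -> 0 < b -> crooked v (a *: em - b *: ep) q -> half q.
Proof.
move=> ha hb.
have [nm [fm [um pm]]] := Um; have [np [fp [up pp]]] := Up.
have hN := Nneg.
have Pv : ldot (a *: em - b *: ep) v = 0.
  by rewrite ldotZB [ldot em v]ldotC [ldot ep v]ldotC pm pp; ring.
have Pep : ldot (a *: em - b *: ep) ep = a * ldot em ep.
  by rewrite ldotZB [ldot ep ep]np; ring.
have Pem : ldot (a *: em - b *: ep) em = - b * ldot em ep.
  by rewrite ldotZB [ldot em em]nm [ldot ep em]ldotC; ring.
rewrite /half; case=> [[vp [w [Hvp [Hw ->]]]] | [[vm [w [Hvm [Hw ->]]]] | [x [vx [xx ->]]]]].
- rewrite (vplus_unique Hvp Hp) in Hw.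
  have [h1 h2] := wing_p Hw.
  left; rewrite (ldotD _ w v) (ldotD _ w ep) Pv Pep h2; split; nra.
- rewrite (vminus_unique Hvm Hm) in Hw.
  have [h1 h2] := wing_m Hw.
  right; rewrite (ldotD _ w v) (ldotD _ w em) Pv Pem h2; split; nra.
- have hs := stem vx xx.
  rewrite (ldotD _ x v) (ldotD _ x ep) (ldotD _ x em) Pv Pep Pem [ldot x v]ldotC vx.
  have [hp|hp] := ltP (a * ldot em ep + ldot x ep) 0.
  + by left; split => //; lra.
  + right; split; first lra.
    have h1 : 0 < ldot x ep by nra.
    have h2 : 0 <= ldot x em.
      rewrite leNgt; apply/negP => h3.
      have : ldot x ep * ldot x em < 0 by rewrite pmulr_rlt0.
      lra.
    nra.
Qed.

End Frame.
End Aux3.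


Section Aux4.
Variable R : rcfType.
Implicit Types (a b c d e f q u v w x y z : 'rV[R]_3).

Lemma perp2 v1 v2 e A B : null e -> ldot v1 e = 0 -> ldot v2 e = 0 ->
  0 < ldot (lcross v1 v2) (lcross v1 v2) -> dt e A B = 0.
Proof.
move=> ne e1 e2 hw.
have h := gram e v1 v2 e v1 v2.
rewrite ne [ldot e v1]ldotC [ldot e v2]ldotC e1 e2 in h.
have h0 : dt e v1 v2 = 0.
  have : dt e v1 v2 ^+ 2 = 0 by rewrite expr2 h; ring.
  by move/eqP; rewrite sqrf_eq0 => /eqP.
have g := gram (lcross v1 v2) v1 v2 e A B.
have we : ldot (lcross v1 v2) e = 0 by rewrite ldotC.
rewrite we [ldot v1 e]e1 [ldot v2 e]e2 in g.
have hd : dt (lcross v1 v2) v1 v2 = ldot (lcross v1 v2) (lcross v1 v2) by [].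
rewrite hd in g.
have : ldot (lcross v1 v2) (lcross v1 v2) * dt e A B = 0 by rewrite g; ring.
by move/eqP; rewrite mulf_eq0 (negbTE (lt0r_neq0 hw)) /= => /eqP.
Qed.

Lemma final (l1 l2 s1 F1 s2 F2 d g1 g2 : R) :
  l2 * d * s1 - l2 * g2 * F1 + l1 * d * s2 - l1 * g1 * F2 = 0 ->
  d <= 0 -> g2 < 0 -> g1 <= 0 ->
  ((0 <= l2 * s1 /\ l2 * F1 < 0 /\ 0 <= l1 * s2 /\ l1 * F2 < 0) \/
   (l2 * s1 <= 0 /\ 0 < l2 * F1 /\ l1 * s2 <= 0 /\ 0 < l1 * F2)) -> False.
Proof.
move=> E hd hg2 hg1.
have E2 : d * (l2 * s1) - g2 * (l2 * F1) + d * (l1 * s2) - g1 * (l1 * F2) = 0.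
  by rewrite -E; ring.
move: E2; set X := l2 * s1; set Y := l2 * F1; set Z := l1 * s2; set W := l1 * F2 => E2.
case=> [[hX [hY [hZ hW]]] | [hX [hY [hZ hW]]]].
- have t1 : d * X <= 0 by nra.
  have t2 : 0 < g2 * Y by nra.
  have t3 : d * Z <= 0 by nra.
  have t4 : 0 <= g1 * W by nra.
  lra.
- have t1 : 0 <= d * X by nra.
  have t2 : g2 * Y < 0 by nra.
  have t3 : 0 <= d * Z by nra.
  have t4 : g1 * W <= 0 by nra.
  lra.
Qed.

Lemma case4 q v1 v2 f1 f2 (l1 l2 : R) :
  (forall X, dt v1 f1 X = l1 * ldot X f1) -> (forall X, dt v2 f2 X = l2 * ldot X f2) ->
  null f1 -> future f1 -> null f2 -> future f2 ->
  ldot v1 f2 < 0 -> ldot v2 f1 <= 0 ->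
  ((0 <= l2 * ldot q v1 /\ l2 * ldot q f1 < 0 /\ 0 <= l1 * ldot q v2 /\ l1 * ldot q f2 < 0) \/
   (l2 * ldot q v1 <= 0 /\ 0 < l2 * ldot q f1 /\ l1 * ldot q v2 <= 0 /\ 0 < l1 * ldot q f2)) -> False.
Proof.
move=> E1 E2 n1 p1 n2 p2 g2 g1 H.
have F := four q v1 f1 v2 f2.
have c1 : dt f1 v2 f2 = l2 * ldot f1 f2 by rewrite dt_cyc E2.
have c2 : dt v1 v2 f2 = l2 * ldot v1 f2 by rewrite dt_cyc E2.
have c3 : dt v1 f1 f2 = l1 * ldot f1 f2 by rewrite E1 ldotC.
have c4 : dt v1 f1 v2 = l1 * ldot v2 f1 by rewrite E1.
rewrite c1 c2 c3 c4 in F.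
exact: (final F (fnull_le n1 p1 n2 p2) g2 g1 H).
Qed.

End Aux4.

Unset Implicit Arguments.

Theorem corollary4p4 (R : rcfType) (v1 v2 v1m v1p v2m v2p : 'rV[R]_3)
  (a1 b1 a2 b2 : R) :
  consistently_oriented v1 v2 ->
  ultraparallel v1 v2 ->
  is_vminus v1 v1m -> is_vplus v1 v1p ->
  is_vminus v2 v2m -> is_vplus v2 v2p ->
  0 < a1 -> 0 < b1 -> 0 < a2 -> 0 < b2 ->
  ~ (exists q : 'rV[R]_3,
       crooked v1 (a1 *: v1m - b1 *: v1p) q /\
       crooked v2 (a2 *: v2m - b2 *: v2p) q).
Proof.
move=> [s1 [s2 [v12 [co1 co2]]]] [_ [_ sw]] Hm1 Hp1 Hm2 Hp2 ha1 hb1 ha2 hb2 [q [C1 C2]].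
have H1 := crooked_half Hm1 Hp1 ha1 hb1 C1.
have H2 := crooked_half Hm2 Hp2 ha2 hb2 C2.
have [n1m [f1m _]] := Um Hm1. have [n1p [f1p _]] := Up Hp1.
have [n2m [f2m [_ q2m]]] := Um Hm2. have [n2p [f2p [_ q2p]]] := Up Hp2.
have D2 := Dpos Hm2 Hp2.
have g2m : ldot v1 v2m < 0.
  rewrite lt_neqAle co1 ?andbT; last by left.
  apply/negP => /eqP E.
  have := perp2 v2p v2 n2m E q2m sw.
  by move=> Z; move: D2; rewrite Z ltxx.
have g2p : ldot v1 v2p < 0.
  rewrite lt_neqAle co1 ?andbT; last by right.
  apply/negP => /eqP E.
  have := perp2 v2 v2m n2p E q2p sw.
  by move=> Z; move: D2; rewrite dt_cyc Z ltxx.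
have g1m : ldot v2 v1m <= 0 by apply: co2; left.
have g1p : ldot v2 v1p <= 0 by apply: co2; right.
have lp1 := lp_pos Hm1 Hp1 s1. have lm1 := lm_neg Hm1 Hp1 s1.
have lp2 := lp_pos Hm2 Hp2 s2. have lm2 := lm_neg Hm2 Hp2 s2.
case: H1 => [[a b] | [a b]]; case: H2 => [[c d] | [c d]].
- apply: (case4 (q := q) (lpE Hm1 Hp1) (lpE Hm2 Hp2) n1p f1p n2p f2p g2p g1p).
  left; split; [nra | split; [nra | split; nra]].
- apply: (case4 (q := q) (lpE Hm1 Hp1) (lmE Hm2 Hp2) n1p f1p n2m f2m g2m g1p).
  right; split; [nra | split; [nra | split; nra]].
- apply: (case4 (q := q) (lmE Hm1 Hp1) (lpE Hm2 Hp2) n1m f1m n2p f2p g2p g1m).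
  right; split; [nra | split; [nra | split; nra]].
- apply: (case4 (q := q) (lmE Hm1 Hp1) (lmE Hm2 Hp2) n1m f1m n2m f2m g2m g1m).
  left; split; [nra | split; [nra | split; nra]].
Qed.
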